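(* Let $X$, $Y$ be disjoint sets of cardinality at least two, $M\le\mathrm{Sym}(X)$ and $N\le\mathrm{Sym}(Y)$ nontrivial permutation groups, $T$ the $(|X|,|Y|)$-biregular tree and $c$ a legal colouring. If $m$ (resp. $n$) denotes the number of orbits of $M$ (resp. $N$), then the quotient $U_c(M,N)\backslash T$ is the complete bipartite graph $K_{m,n}$.
   Context: $T$ has natural bipartition $VT=V_X\sqcup V_Y$ (vertices in $V_X$ have valency $|X|$, in $V_Y$ valency $|Y|$). $A(v)$, $\overline{A}(v)$ are the sets of arcs with origin, resp. terminus, $v$. A legal colouring is a map $c:AT\to X\cup Y$ restricting to a bijection $A(v)\to X$ for $v\in V_X$, to a bijection $A(v)\to Y$ for $v\in V_Y$, and constant on each $\overline{A}(v)$. $U_c(M,N)$ is the group of $g\in\mathrm{Aut}(T)$ with $gV_X=V_X$ and $c|_{A(gv)}\circ g|_{A(v)}\circ(c|_{A(v)})^{-1}$ in $M$ for $v\in V_X$ and in $N$ for $v\in V_Y$. For a group $G$ acting on a tree without inversion, the quotient $G\backslash T$ is the (multi)graph whose vertices are the $G$-orbits on $VT$ and whose edges are the $G$-orbits on edges of $T$, an edge-orbit being incident to the vertex-orbits containing its endpoints. *)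

(* Defs.v *)
From Stdlib Require Import List Relations.
Import ListNotations.

Definition bij {A B : Type} (f : A -> B) : Prop :=
  exists g : B -> A, (forall a, g (f a) = a) /\ (forall b, f (g b) = b).

Definition perm_group {X : Type} (M : (X -> X) -> Prop) : Prop :=
  (forall s, M s -> bij s) /\
  M (fun x => x) /\
  (forall s t, M s -> M t -> M (fun x => s (t x))) /\
  (forall s, M s -> exists t, M t /\ (forall x, t (s x) = x) /\ (forall x, s (t x) = x)).

Definition nontrivial_group {X : Type} (M : (X -> X) -> Prop) : Prop :=
  exists s, M s /\ exists x, s x <> x.

Definition orbit {X : Type} (M : (X -> X) -> Prop) (x : X) : X -> Prop :=
  fun y => exists s, M s /\ s x = y.

Definition orbits {X : Type} (M : (X -> X) -> Prop) : Type :=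
  { S : X -> Prop | exists x, S = orbit M x }.

Fixpoint is_walk {V : Type} (adj : V -> V -> Prop) (l : list V) : Prop :=
  match l with
  | x :: ((y :: _) as t) => adj x y /\ is_walk adj t
  | _ => True
  end.

Fixpoint no_backtrack {V : Type} (l : list V) : Prop :=
  match l with
  | x :: ((_ :: z :: _) as t) => x <> z /\ no_backtrack t
  | _ => True
  end.

Definition is_tree {V : Type} (adj : V -> V -> Prop) : Prop :=
  (forall u v, adj u v -> adj v u) /\
  (forall v, ~ adj v v) /\
  inhabited V /\
  (forall u v, clos_refl_trans V adj u v) /\
  (forall v l, l <> [] -> is_walk adj (v :: l) -> no_backtrack (v :: l) ->
     last l v <> v).

Definition is_aut {V : Type} (adj : V -> V -> Prop) (g : V -> V) : Prop :=
  bij g /\ (forall u v, adj u v <-> adj (g u) (g v)).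

Definition bipartition {V : Type} (adj : V -> V -> Prop) (VX : V -> Prop) : Prop :=
  forall u v, adj u v -> (VX u <-> ~ VX v).

(* Arcs are pairs (u,v) with adj u v; a colouring assigns c u v : X + Y to
   the arc (u,v) (values on non-arcs are irrelevant).  Colours of X are
   inl x, colours of Y are inr y (X, Y disjoint). *)
Definition legal_colouring {V X Y : Type} (adj : V -> V -> Prop) (VX : V -> Prop)
    (c : V -> V -> X + Y) : Prop :=
  (forall v, VX v ->
     (forall w, adj v w -> exists x, c v w = inl x) /\
     (forall w w', adj v w -> adj v w' -> c v w = c v w' -> w = w') /\
     (forall x, exists w, adj v w /\ c v w = inl x)) /\
  (forall v, ~ VX v ->
     (forall w, adj v w -> exists y, c v w = inr y) /\
     (forall w w', adj v w -> adj v w' -> c v w = c v w' -> w = w') /\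
     (forall y, exists w, adj v w /\ c v w = inr y)) /\
  (forall v u u', adj u v -> adj u' v -> c u v = c u' v).

(* The group U_c(M,N) as a predicate on maps V -> V.  The local action
   c|A(gv) o g|A(v) o (c|A(v))^{-1} is the map s with
   c (g v) (g w) = s (c v w) for w adjacent to v. *)
Definition U_c {V X Y : Type} (adj : V -> V -> Prop) (VX : V -> Prop)
    (c : V -> V -> X + Y) (M : (X -> X) -> Prop) (N : (Y -> Y) -> Prop)
    (g : V -> V) : Prop :=
  is_aut adj g /\
  (forall v, VX v -> VX (g v)) /\
  (forall w, VX w -> exists v, VX v /\ g v = w) /\
  (forall v, VX v -> exists s, M s /\
     forall w x, adj v w -> c v w = inl x -> c (g v) (g w) = inl (s x)) /\
  (forall v, ~ VX v -> exists s, N s /\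
     forall w y, adj v w -> c v w = inr y -> c (g v) (g w) = inr (s y)).

Definition qvert {V : Type} (G : (V -> V) -> Prop) : Type := orbits G.

(* the G-orbit of the (undirected) edge {u,v}, recorded as a set of
   ordered pairs containing both orientations of each edge in the orbit *)
Definition edge_orbit {V : Type} (G : (V -> V) -> Prop) (u v : V) : V * V -> Prop :=
  fun p => exists g, G g /\ ((g u, g v) = p \/ (g v, g u) = p).

Definition qedge {V : Type} (adj : V -> V -> Prop) (G : (V -> V) -> Prop) : Type :=
  { E : V * V -> Prop | exists u v, adj u v /\ E = edge_orbit G u v }.

Definition qinc {V : Type} (adj : V -> V -> Prop) (G : (V -> V) -> Prop)
    (E : qedge adj G) (O : qvert G) : Prop :=
  exists u v, proj1_sig E (u, v) /\ proj1_sig O u.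

(* the complete bipartite graph K_{A,B}: vertices A + B, one edge (a,b)
   joining inl a and inr b for each pair *)
Definition K_inc {A B : Type} (e : A * B) (z : A + B) : Prop :=
  z = inl (fst e) \/ z = inr (snd e).

Definition quotient_iso_Kbip {V : Type} (adj : V -> V -> Prop) (G : (V -> V) -> Prop)
    (A B : Type) : Prop :=
  exists (phi : qvert G -> A + B) (psi : qedge adj G -> A * B),
    bij phi /\ bij psi /\
    forall E O, qinc adj G E O <-> K_inc (psi E) (phi O).

(* Main.v *)
Require Import Defs.
From Stdlib Require Import List Relations Arith Lia Classical ClassicalEpsilon FunctionalExtensionality PropExtensionality ProofIrrelevance.
Import ListNotations.

Lemma sig_ext (A : Type) (P : A -> Prop) (a b : sig P) : proj1_sig a = proj1_sig b -> a = b.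
Proof. destruct a, b; simpl; intros ->; f_equal; apply proof_irrelevance. Qed.

Lemma bij_of (A B : Type) (f : A -> B) :
  (forall a b, f a = f b -> a = b) -> (forall b, exists a, f a = b) -> bij f.
Proof.
  intros Hi Hs. exists (fun b => proj1_sig (constructive_indefinite_description _ (Hs b))).
  split.
  - intros a. apply Hi. destruct (constructive_indefinite_description _ (Hs (f a))); auto.
  - intros b. destruct (constructive_indefinite_description _ (Hs b)); auto.
Qed.

Section Orb.
Variables (Z : Type) (P : (Z -> Z) -> Prop) (HP : perm_group P).

Lemma orb_self x : orbit P x x.
Proof. exists (fun x => x). destruct HP as [_ [H _]]. auto. Qed.

Lemma orb_shift s x : P s -> orbit P (s x) = orbit P x.
Proof.
  intros Hs. destruct HP as [_ [Hid [Hc Hi]]].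
  apply functional_extensionality; intro y; apply propositional_extensionality.
  split.
  - intros [r [Hr <-]]. exists (fun x => r (s x)). auto.
  - intros [r [Hr <-]]. destruct (Hi s Hs) as [t [Ht [H1 H2]]].
    exists (fun x => r (t x)). split; auto. rewrite H1; auto.
Qed.

Lemma orb_eq_iff x x' : orbit P x = orbit P x' <-> exists s, P s /\ s x = x'.
Proof.
  split.
  - intros H. assert (orbit P x x') as Hx by (rewrite H; apply orb_self). exact Hx.
  - intros [s [Hs <-]]. symmetry. apply orb_shift; auto.
Qed.

Definition mkorb (x : Z) : orbits P := exist _ (orbit P x) (ex_intro _ x eq_refl).

Lemma mkorb_eq x x' : mkorb x = mkorb x' <-> exists s, P s /\ s x = x'.
Proof.
  rewrite <- orb_eq_iff. split.
  - intros H. exact (f_equal (@proj1_sig _ _) H).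
  - intros H. apply sig_ext. exact H.
Qed.

Lemma orbits_mk (O : orbits P) : exists x, O = mkorb x.
Proof. destruct O as [S [x Hx]]. exists x. apply sig_ext. simpl. auto. Qed.

End Orb.
Arguments mkorb {Z} P x.

Section Tree.
Variables (V X Y : Type) (adj : V -> V -> Prop) (VX : V -> Prop) (c : V -> V -> X + Y).
Hypothesis Hsym : forall u v, adj u v -> adj v u.
Hypothesis Hirr : forall v, ~ adj v v.
Hypothesis Vinh : inhabited V.
Hypothesis Hconn : forall u v, clos_refl_trans V adj u v.
Hypothesis Hacyc : forall v l, l <> [] -> is_walk adj (v :: l) -> no_backtrack (v :: l) -> last l v <> v.
Hypothesis Hbip : bipartition adj VX.
Hypothesis Hc : legal_colouring adj VX c.

Definition ok (z : V) (col : X + Y) : Prop :=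
  match col with inl _ => VX z | inr _ => ~ VX z end.

Lemma ok_col z w : adj z w -> ok z (c z w).
Proof.
  intros H. destruct Hc as [H1 [H2 H3]].
  destruct (classic (VX z)) as [Hz|Hz].
  - destruct (H1 z Hz) as [A _]. destruct (A w H) as [x ->]. exact Hz.
  - destruct (H2 z Hz) as [A _]. destruct (A w H) as [y ->]. exact Hz.
Qed.

Lemma col_uniq z w w' : adj z w -> adj z w' -> c z w = c z w' -> w = w'.
Proof.
  intros Ha Hb Hcc. destruct Hc as [H1 [H2 H3]].
  destruct (classic (VX z)) as [Hz|Hz].
  - destruct (H1 z Hz) as [_ [B _]]. eauto.
  - destruct (H2 z Hz) as [_ [B _]]. eauto.
Qed.

Lemma col_ex z col : ok z col -> exists w, adj z w /\ c z w = col.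
Proof.
  destruct Hc as [H1 [H2 H3]]. destruct col as [x|y]; simpl; intros Hz.
  - destruct (H1 z Hz) as [_ [_ B]]. apply B.
  - destruct (H2 z Hz) as [_ [_ B]]. apply B.
Qed.

Lemma col_in z z' q : adj z q -> adj z' q -> c z q = c z' q.
Proof. destruct Hc as [_ [_ H3]]. eauto. Qed.

Definition nb (z : V) (col : X + Y) : V :=
  epsilon Vinh (fun w => adj z w /\ c z w = col).

Lemma nb_spec z col : ok z col -> adj z (nb z col) /\ c z (nb z col) = col.
Proof. intros H. unfold nb. apply epsilon_spec. apply col_ex; auto. Qed.

Lemma nb_self z w : adj z w -> nb z (c z w) = w.
Proof.
  intros H. destruct (nb_spec z (c z w) (ok_col z w H)) as [A B].
  eapply col_uniq; eauto.
Qed.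

Lemma bip_iff z w : adj z w -> (VX z <-> ~ VX w).
Proof. apply Hbip. Qed.

Definition sg (s1 : X -> X) (s2 : Y -> Y) (col : X + Y) : X + Y :=
  match col with inl x => inl (s1 x) | inr y => inr (s2 y) end.

Lemma ok_sg s1 s2 z a col : (VX z <-> VX a) -> ok z col -> ok a (sg s1 s2 col).
Proof. destruct col; simpl; tauto. Qed.

Definition Inv s1 s2 p a : Prop :=
  (VX p <-> VX a) /\ (forall q q', adj q p -> adj q' a -> c q' a = sg s1 s2 (c q p)).

Lemma Inv_step s1 s2 p a z : Inv s1 s2 p a -> adj p z ->
  let a1 := nb a (sg s1 s2 (c p z)) in
  adj a a1 /\ c a a1 = sg s1 s2 (c p z) /\ Inv s1 s2 z a1.
Proof.
  intros [HV HL] Hpz a1.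
  assert (Hok : ok a (sg s1 s2 (c p z))) by (apply ok_sg with p; auto; apply ok_col; auto).
  destruct (nb_spec _ _ Hok) as [A B]. fold a1 in A, B.
  split; [exact A|]. split; [exact B|]. split.
  - pose proof (bip_iff _ _ Hpz). pose proof (bip_iff _ _ A).
    destruct (classic (VX z)); destruct (classic (VX a1)); tauto.
  - intros q q' Hq Hq'. rewrite (col_in q' a a1 Hq' A), B.
    rewrite (col_in q p z Hq Hpz). reflexivity.
Qed.

Lemma bt s1 s2 p a z : Inv s1 s2 p a -> adj p z ->
  nb (nb a (sg s1 s2 (c p z))) (sg s1 s2 (c z p)) = a.
Proof.
  intros HI Hpz. destruct (Inv_step _ _ _ _ _ HI Hpz) as [A [B HI2]].
  set (a1 := nb a (sg s1 s2 (c p z))) in *.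
  assert (Hok : ok a1 (sg s1 s2 (c z p))).
  { apply ok_sg with z. apply HI2. apply ok_col; auto. }
  destruct (nb_spec _ _ Hok) as [C D].
  apply col_uniq with a1; auto. rewrite D.
  symmetry. apply (proj2 HI); auto.
Qed.

Inductive W (s1 : X -> X) (s2 : Y -> Y) : V -> V -> list V -> V -> V -> Prop :=
| W0 p a : W s1 s2 p a nil p a
| WS p a z l e e' : adj p z -> W s1 s2 z (nb a (sg s1 s2 (c p z))) l e e' -> W s1 s2 p a (z :: l) e e'.

Lemma last_ind (l : list V) x d d' : last (x :: l) d = last (x :: l) d'.
Proof. revert x; induction l; intros; simpl; auto. apply IHl. Qed.

Section WL.
Variables (s1 : X -> X) (s2 : Y -> Y).

Lemma W_walk p a l e e' : W s1 s2 p a l e e' -> is_walk adj (p :: l) /\ e = last l p.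
Proof.
  induction 1; simpl; auto. destruct IHW as [A B]. split.
  - destruct l; simpl; auto.
  - rewrite B. destruct l; [reflexivity|]. apply last_ind.
Qed.

Lemma W_inv p a l e e' : Inv s1 s2 p a -> W s1 s2 p a l e e' -> Inv s1 s2 e e'.
Proof.
  intros HI HW. revert HI. induction HW as [|p a z l e e' Hpz HW IH]; auto. intros HI. apply IH. apply (Inv_step _ _ _ _ _ HI Hpz).

Qed.

Lemma W_bt p a l e e' : Inv s1 s2 p a -> W s1 s2 p a l e e' -> ~ no_backtrack (p :: l) ->
  exists l', length l' < length l /\ W s1 s2 p a l' e e'.
Proof.
  intros HI HW. revert HI. induction HW as [p a|p a z l e e' Hpz HW IH]; intros HI Hnb.
  - simpl in Hnb. tauto.
  - destruct (Inv_step _ _ _ _ _ HI Hpz) as [_ [_ HI2]].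
    destruct l as [|w t'].
    + simpl in Hnb. tauto.
    + destruct (classic (p = w)) as [<-|Hpw].
      * inversion HW; subst. exists t'. split; [simpl; auto|].
        rewrite (bt _ _ _ _ _ HI Hpz) in H6. exact H6.
      * assert (~ no_backtrack (z :: w :: t')) as Hnb2.
        { intro N. apply Hnb. simpl. simpl in N. tauto. }
        destruct (IH HI2 Hnb2) as [l'' [L1 L2]].
        exists (z :: l''). split; [simpl in *; auto with arith|].
        constructor; auto.
Qed.

Lemma W_closed n : forall p a l e', length l <= n -> Inv s1 s2 p a -> W s1 s2 p a l p e' -> e' = a.
Proof.
  induction n; intros p a l e' Hl HI HW.
  - destruct l; [|simpl in Hl; inversion Hl]. inversion HW; auto.
  - destruct l as [|z t].
    + inversion HW; auto.
    + destruct (W_walk _ _ _ _ _ HW) as [Hw Hlast].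
      assert (~ no_backtrack (p :: z :: t)) as Hnb.
      { intro Nb. apply (Hacyc p (z :: t)); auto. discriminate. }
      destruct (W_bt _ _ _ _ _ HI HW Hnb) as [l' [L1 L2]].
      apply (IHn p a l'); auto. simpl in *. lia.
Qed.

Lemma W_snoc p a l e e' w : W s1 s2 p a l e e' -> adj e w ->
  W s1 s2 p a (l ++ [w]) w (nb e' (sg s1 s2 (c e w))).
Proof.
  induction 1; intros Hew; simpl.
  - constructor; auto. constructor.
  - constructor; auto.
Qed.

Lemma W_app p a l1 e e' l2 f f' : W s1 s2 p a l1 e e' -> W s1 s2 e e' l2 f f' ->
  W s1 s2 p a (l1 ++ l2) f f'.
Proof. induction 1; intros; simpl; auto. constructor; auto. Qed.

Lemma W_rev p a l e e' : Inv s1 s2 p a -> W s1 s2 p a l e e' -> exists l2, W s1 s2 e e' l2 p a.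
Proof.
  intros HI HW. revert HI. induction HW as [p a|p a z l e e' Hpz HW IH]; intros HI.
  - exists []. constructor.
  - destruct (Inv_step _ _ _ _ _ HI Hpz) as [_ [_ HI2]].
    destruct (IH HI2) as [l2 H2].
    exists (l2 ++ [p]). pose proof (W_snoc _ _ _ _ _ p H2 (Hsym _ _ Hpz)) as H3.
    rewrite (bt _ _ _ _ _ HI Hpz) in H3. exact H3.
Qed.

Lemma W_fun p a l1 l2 z b1 b2 : Inv s1 s2 p a -> W s1 s2 p a l1 z b1 -> W s1 s2 p a l2 z b2 -> b1 = b2.
Proof.
  intros HI H1 H2. destruct (W_rev _ _ _ _ _ HI H2) as [r Hr].
  pose proof (W_app _ _ _ _ _ _ _ _ Hr H1) as H3.
  apply (W_closed (length (r ++ l1)) z b2 (r ++ l1) b1); auto. eapply W_inv; eauto.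

Qed.

Lemma W_ex p a z : exists l e', W s1 s2 p a l z e'.
Proof.
  pose proof (Hconn p z) as H. apply clos_rt_rt1n in H. revert a.
  induction H as [p|p y z Hpy H IH]; intros a.
  - exists [], a. constructor.
  - destruct (IH (nb a (sg s1 s2 (c p y)))) as [l [e' He]].
    exists (y :: l), e'. constructor; auto.
Qed.

Definition gmap p a z : V := epsilon Vinh (fun z' => exists l, W s1 s2 p a l z z').

Lemma gmap_spec p a z : exists l, W s1 s2 p a l z (gmap p a z).
Proof.
  unfold gmap. apply epsilon_spec. destruct (W_ex p a z) as [l [e' H]]. eauto.
Qed.

Lemma gmap_root p a : Inv s1 s2 p a -> gmap p a p = a.
Proof.
  intros HI. destruct (gmap_spec p a p) as [l H].
  eapply W_fun; eauto. constructor.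
Qed.

Lemma gmap_inv p a z : Inv s1 s2 p a -> Inv s1 s2 z (gmap p a z).
Proof. intros HI. destruct (gmap_spec p a z) as [l H]. eapply W_inv; eauto. Qed.

Lemma gmap_step p a z w : Inv s1 s2 p a -> adj z w ->
  gmap p a w = nb (gmap p a z) (sg s1 s2 (c z w)).
Proof.
  intros HI H. destruct (gmap_spec p a z) as [l Hl]. destruct (gmap_spec p a w) as [l2 Hl2].
  pose proof (W_snoc _ _ _ _ _ _ Hl H). eapply W_fun; eauto.
Qed.

Lemma gmap_adj p a z w : Inv s1 s2 p a -> adj z w ->
  adj (gmap p a z) (gmap p a w) /\ c (gmap p a z) (gmap p a w) = sg s1 s2 (c z w).
Proof.
  intros HI H. rewrite (gmap_step p a z w HI H).
  destruct (Inv_step _ _ _ _ _ (gmap_inv p a z HI) H) as [A [B _]]. auto.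
Qed.

End WL.

Lemma sg_inv s1 s2 t1 t2 col : (forall x, t1 (s1 x) = x) -> (forall y, t2 (s2 y) = y) ->
  sg t1 t2 (sg s1 s2 col) = col.
Proof. intros H1 H2. destruct col; simpl; congruence. Qed.

Lemma Inv_rev s1 s2 t1 t2 p a : (forall x, t1 (s1 x) = x) -> (forall y, t2 (s2 y) = y) ->
  Inv s1 s2 p a -> Inv t1 t2 a p.
Proof.
  intros H1 H2 [HV HL]. split; [tauto|]. intros q' q Hq' Hq.
  rewrite (HL q q' Hq Hq'). symmetry. apply sg_inv; auto.
Qed.

Lemma comp_id s1 s2 t1 t2 p a : (forall x, t1 (s1 x) = x) -> (forall y, t2 (s2 y) = y) ->
  Inv s1 s2 p a -> Inv t1 t2 a p -> forall z, gmap t1 t2 a p (gmap s1 s2 p a z) = z.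
Proof.
  intros H1 H2 HI HJ z. pose proof (Hconn p z) as H. apply clos_rt_rtn1 in H.
  induction H as [|w z Hwz H IH].
  - rewrite gmap_root; auto. rewrite gmap_root; auto.
  - destruct (gmap_adj s1 s2 p a w z HI Hwz) as [A B].
    rewrite (gmap_step t1 t2 a p _ _ HJ A), IH, B, sg_inv; auto.
    apply nb_self; auto.
Qed.

Lemma colour_aut s1 s2 t1 t2 p a :
  (forall x, t1 (s1 x) = x) -> (forall x, s1 (t1 x) = x) ->
  (forall y, t2 (s2 y) = y) -> (forall y, s2 (t2 y) = y) -> Inv s1 s2 p a ->
  exists g h : V -> V, g p = a /\ (forall z, h (g z) = z) /\ (forall z, g (h z) = z) /\
   (forall z w, adj z w -> adj (g z) (g w) /\ c (g z) (g w) = sg s1 s2 (c z w)) /\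
   (forall z w, adj z w -> adj (h z) (h w)) /\ (forall z, VX z <-> VX (g z)).
Proof.
  intros A1 A2 B1 B2 HI. assert (HJ : Inv t1 t2 a p) by (eapply Inv_rev; eauto).
  exists (gmap s1 s2 p a), (gmap t1 t2 a p). split; [apply gmap_root; auto|].
  split; [apply comp_id; auto|]. split; [apply comp_id; auto|].
  split; [intros; apply gmap_adj; auto|].
  split; [intros; apply gmap_adj; auto|].
  intros z. apply (gmap_inv s1 s2 p a z HI).
Qed.

Variables (M : (X -> X) -> Prop) (N : (Y -> Y) -> Prop).
Hypothesis HM : perm_group M.
Hypothesis HN : perm_group N.
Variables (x0 : X) (y0 : Y).

Notation G := (U_c adj VX c M N).

Lemma G_bij g : G g -> exists h, (forall x, h (g x) = x) /\ (forall x, g (h x) = x).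
Proof. intros [[[h [A B]] _] _]. eauto. Qed.

Lemma G_adj g u v : G g -> adj u v -> adj (g u) (g v).
Proof. intros [[_ A] _] H. apply (proj1 (A u v)); auto. Qed.

Lemma G_VX g z : G g -> (VX (g z) <-> VX z).
Proof.
  intros Hg. destruct (G_bij g Hg) as [h [H1 H2]].
  destruct Hg as [_ [A [B _]]]. split; auto.
  intros Hz. destruct (B _ Hz) as [v [Hv E]].
  rewrite <- (H1 z), <- E, H1. auto.
Qed.

Lemma G_group : perm_group G.
Proof.
  destruct HM as [_ [Mid [Mc Mi]]]. destruct HN as [_ [Nid [Nc Ni]]].
  split; [|split; [|split]].
  - intros g Hg. apply Hg.
  - split; [split|].
    + exists (fun x => x). auto.
    + tauto.
    + split; [auto|]. split; [eauto|].
      split; intros v Hv; [exists (fun x => x) | exists (fun y => y)]; split; auto;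
        intros w x Hw E; auto.
  - intros g' g Hg' Hg. split; [split|].
    + destruct (G_bij g Hg) as [h [A B]]. destruct (G_bij g' Hg') as [h' [A' B']].
      exists (fun x => h (h' x)). split; intros; simpl; [rewrite A'; auto| rewrite B; auto].
    + intros u v. split; intros H.
      * apply G_adj; auto. apply G_adj; auto.
      * apply (proj2 (proj1 Hg)). apply (proj2 (proj1 Hg')). auto.
    + split; [intros v Hv; apply (G_VX g' _ Hg'); apply (G_VX g _ Hg); auto|].
      split.
      * intros w Hw. destruct Hg' as [_ [_ [B' _]]]. destruct (B' w Hw) as [v [Hv <-]].
        destruct Hg as [_ [_ [B _]]]. destruct (B v Hv) as [u [Hu <-]]. eauto.
      * assert (Ga : forall u w, adj u w -> adj (g u) (g w)) by (intros; apply G_adj; auto).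
        split.
        -- intros v Hv. destruct Hg as [_ [A [_ [L _]]]]. destruct (L v Hv) as [s [Hs Ls]].
           destruct Hg' as [_ [_ [_ [L' _]]]]. destruct (L' (g v) (A v Hv)) as [t [Ht Lt]].
           exists (fun x => t (s x)). split; [auto|]. intros w x Hw E.
           apply Lt; auto.
        -- intros v Hv.
           assert (Hgv : ~ VX (g v)) by (rewrite (G_VX g v Hg); auto).
           destruct Hg as [_ [_ [_ [_ L]]]]. destruct (L v Hv) as [s [Hs Ls]].
           destruct Hg' as [_ [_ [_ [_ L']]]]. destruct (L' (g v) Hgv) as [t [Ht Lt]].
           exists (fun x => t (s x)). split; [auto|]. intros w x Hw E.
           apply Lt; auto.
  - intros g Hg. destruct (G_bij g Hg) as [h [H1 H2]].
    exists h. split; [|split; auto].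
    assert (Hadj : forall u v, adj u v <-> adj (h u) (h v)).
    { intros u v. rewrite (proj2 (proj1 Hg) (h u) (h v)), !H2. tauto. }
    split; [split; [exists g; auto | exact Hadj]|].
    split; [intros v Hv; rewrite <- (G_VX g _ Hg), H2; auto|].
    split; [intros w Hw; exists (g w); split; [rewrite (G_VX g _ Hg)|]; auto|].
    split.
    + intros v Hv. assert (Hhv : VX (h v)) by (rewrite <- (G_VX g _ Hg), H2; auto).
      destruct Hg as [_ [_ [_ [L _]]]]. destruct (L (h v) Hhv) as [s [Hs Ls]].
      destruct (Mi s Hs) as [t [Ht [T1 T2]]]. exists t. split; [auto|].
      intros w x Hw E. assert (Ha : adj (h v) (h w)) by exact (proj1 (Hadj v w) Hw).
      pose proof (ok_col _ _ Ha) as Ok. destruct (c (h v) (h w)) as [x'|y'] eqn:Ec; [|contradiction].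
      pose proof (Ls _ _ Ha Ec) as E2. rewrite !H2, E in E2. inversion E2. rewrite T1. auto.
    + intros v Hv. assert (Hhv : ~ VX (h v)) by (rewrite <- (G_VX g _ Hg), H2; auto).
      destruct Hg as [_ [_ [_ [_ L]]]]. destruct (L (h v) Hhv) as [s [Hs Ls]].
      destruct (Ni s Hs) as [t [Ht [T1 T2]]]. exists t. split; [auto|].
      intros w x Hw E. assert (Ha : adj (h v) (h w)) by exact (proj1 (Hadj v w) Hw).
      pose proof (ok_col _ _ Ha) as Ok. destruct (c (h v) (h w)) as [x'|y'] eqn:Ec; [contradiction|].
      pose proof (Ls _ _ Ha Ec) as E2. rewrite !H2, E in E2. inversion E2. rewrite T1. auto.
Qed.
Lemma has_nbr z : exists w, adj z w.
Proof.
  destruct (classic (VX z)) as [H|H].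
  - destruct (col_ex z (inl x0) H) as [w [A _]]. eauto.
  - destruct (col_ex z (inr y0) H) as [w [A _]]. eauto.
Qed.

Definition nbr z : V := epsilon Vinh (fun w => adj z w).
Lemma nbr_adj z : adj (nbr z) z.
Proof. apply Hsym. unfold nbr. apply epsilon_spec. apply has_nbr. Qed.

Definition lab z : X + Y := c (nbr z) z.
Lemma lab_eq q z : adj q z -> lab z = c q z.
Proof. intros H. apply col_in; auto. apply nbr_adj. Qed.

Lemma lab_VX z : (VX z -> exists y, lab z = inr y) /\ (~ VX z -> exists x, lab z = inl x).
Proof.
  pose proof (nbr_adj z) as A. pose proof (ok_col _ _ A) as Ok. unfold lab.
  pose proof (bip_iff _ _ A) as B.
  destruct (c (nbr z) z) as [x|y]; simpl in Ok; split; intros Hz; eauto; tauto.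
Qed.

Lemma lab_inl z x : lab z = inl x -> ~ VX z.
Proof. intros E Hz. destruct (proj1 (lab_VX z) Hz) as [y E2]. congruence. Qed.
Lemma lab_inr z y : lab z = inr y -> VX z.
Proof.
  intros E. apply NNPP. intros Hz. destruct (proj2 (lab_VX z) Hz) as [x E2]. congruence.
Qed.

Definition F z : orbits M + orbits N :=
  match lab z with inl x => inl (mkorb M x) | inr y => inr (mkorb N y) end.

Definition pairOf u v : orbits M * orbits N :=
  match lab u, lab v with
  | inl x, inr y => (mkorb M x, mkorb N y)
  | inr y, inl x => (mkorb M x, mkorb N y)
  | _, _ => (mkorb M x0, mkorb N y0)
  end.

Lemma pairOf_sym u v : pairOf u v = pairOf v u.
Proof. unfold pairOf. destruct (lab u), (lab v); auto. Qed.

Lemma lab_G g z : G g ->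
  match lab z, lab (g z) with
  | inl x, inl x' => exists s, M s /\ s x = x'
  | inr y, inr y' => exists s, N s /\ s y = y'
  | _, _ => False end.
Proof.
  intros Hg. pose proof (nbr_adj z) as A. set (q := nbr z) in *.
  rewrite (lab_eq q z A), (lab_eq (g q) (g z) (G_adj g q z Hg A)).
  pose proof (ok_col _ _ A) as Ok.
  destruct Hg as [_ [_ [_ [L1 L2]]]].
  destruct (c q z) as [x|y] eqn:E; simpl in Ok.
  - destruct (L1 q Ok) as [s [Hs Ls]]. rewrite (Ls z x A E). eauto.
  - destruct (L2 q Ok) as [s [Hs Ls]]. rewrite (Ls z y A E). eauto.
Qed.

Lemma F_G g z : G g -> F (g z) = F z.
Proof.
  intros Hg. pose proof (lab_G g z Hg) as H. unfold F.
  destruct (lab z) as [x|y], (lab (g z)) as [x'|y']; try contradiction;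
    f_equal; symmetry; apply mkorb_eq; auto.
Qed.

Lemma pairOf_G g u v : G g -> pairOf (g u) (g v) = pairOf u v.
Proof.
  intros Hg. pose proof (lab_G g u Hg) as Hu. pose proof (lab_G g v Hg) as Hv. unfold pairOf.
  destruct (lab u) as [x|y], (lab (g u)) as [x'|y']; try contradiction;
  destruct (lab v) as [x2|y2], (lab (g v)) as [x2'|y2']; try contradiction; auto;
  f_equal; symmetry; apply mkorb_eq; auto.
Qed.

Lemma mkG s1 s2 p a : M s1 -> N s2 -> Inv s1 s2 p a ->
  exists g, G g /\ g p = a /\ (forall z w, adj z w -> c (g z) (g w) = sg s1 s2 (c z w)).
Proof.
  intros H1 H2 HI. destruct HM as [_ [_ [_ Mi]]]. destruct HN as [_ [_ [_ Ni]]].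
  destruct (Mi s1 H1) as [t1 [_ [A1 A2]]]. destruct (Ni s2 H2) as [t2 [_ [B1 B2]]].
  destruct (colour_aut s1 s2 t1 t2 p a A1 A2 B1 B2 HI) as [g [h [R [GH [HG [Ad [Hd Vg]]]]]]].
  exists g. split; [|split; [auto| intros; apply Ad; auto]].
  split; [split; [exists h; auto|]|].
  { intros u v. split; [apply Ad|]. intros E. rewrite <- (GH u), <- (GH v). apply Hd; auto. }
  split. { intros v Hv. apply (proj1 (Vg v)). auto. }
  split.
  { intros w Hw. exists (h w). split; [|auto]. apply Vg. rewrite HG; auto. }
  split.
  - intros v Hv. exists s1. split; [auto|]. intros w x Hw E. rewrite (proj2 (Ad v w Hw)), E. auto.
  - intros v Hv. exists s2. split; [auto|]. intros w y Hw E. rewrite (proj2 (Ad v w Hw)), E. auto.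
Qed.

Lemma trans_vertex z1 z2 : F z1 = F z2 -> exists g, G g /\ g z1 = z2.
Proof.
  unfold F. destruct HM as [_ [Mid _]]. destruct HN as [_ [Nid _]].
  destruct (lab z1) as [x1|y1] eqn:E1, (lab z2) as [x2|y2] eqn:E2; intros H; try discriminate.
  - assert (H' : mkorb M x1 = mkorb M x2) by congruence.
    apply mkorb_eq in H'; auto. destruct H' as [s [Hs Es]].
    destruct (mkG s (fun y => y) z1 z2) as [g [Hg [R _]]]; eauto.
    split.
    + pose proof (lab_inl _ _ E1). pose proof (lab_inl _ _ E2). tauto.
    + intros q q' Hq Hq'. rewrite <- (lab_eq _ _ Hq), <- (lab_eq _ _ Hq'), E1, E2. simpl. congruence.
  - assert (H' : mkorb N y1 = mkorb N y2) by congruence.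
    apply mkorb_eq in H'; auto. destruct H' as [s [Hs Es]].
    destruct (mkG (fun x => x) s z1 z2) as [g [Hg [R _]]]; eauto.
    split.
    + pose proof (lab_inr _ _ E1). pose proof (lab_inr _ _ E2). tauto.
    + intros q q' Hq Hq'. rewrite <- (lab_eq _ _ Hq), <- (lab_eq _ _ Hq'), E1, E2. simpl. congruence.
Qed.

Lemma pair_spec u v : adj u v -> VX u ->
  exists x y, lab u = inr y /\ lab v = inl x /\ pairOf u v = (mkorb M x, mkorb N y).
Proof.
  intros A Hu. assert (Hv : ~ VX v) by (apply (bip_iff _ _ A); auto).
  destruct (proj1 (lab_VX u) Hu) as [y Ey]. destruct (proj2 (lab_VX v) Hv) as [x Ex].
  exists x, y. unfold pairOf. rewrite Ey, Ex. auto.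
Qed.

Lemma trans_core a1 b1 a2 b2 : adj a1 b1 -> adj a2 b2 -> VX a1 -> VX a2 ->
  pairOf a1 b1 = pairOf a2 b2 -> exists g, G g /\ g a1 = a2 /\ g b1 = b2.
Proof.
  intros A1 A2 V1 V2 HP.
  destruct (pair_spec _ _ A1 V1) as [x1 [y1 [Ey1 [Ex1 P1]]]].
  destruct (pair_spec _ _ A2 V2) as [x2 [y2 [Ey2 [Ex2 P2]]]].
  rewrite P1, P2 in HP. pose proof (f_equal fst HP) as HPx. pose proof (f_equal snd HP) as HPy. simpl in HPx, HPy.
  apply mkorb_eq in HPx; auto. apply mkorb_eq in HPy; auto.
  destruct HPx as [s [Hs Es]]. destruct HPy as [r [Hr Er]].
  destruct (mkG s r a1 a2 Hs Hr) as [g [Hg [R Cg]]].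
  { split; [tauto|]. intros q q' Hq Hq'. rewrite <- (lab_eq _ _ Hq), <- (lab_eq _ _ Hq'), Ey1, Ey2.
    simpl. congruence. }
  exists g. split; auto. split; auto.
  pose proof (Cg a1 b1 A1) as C. rewrite R in C. rewrite <- (lab_eq _ _ A1), Ex1 in C.
  simpl in C. rewrite Es in C. rewrite <- Ex2, (lab_eq _ _ A2) in C.
  apply col_uniq with a2; auto. rewrite <- R. apply G_adj; auto.
Qed.

Lemma side u v : adj u v -> (VX u /\ ~ VX v) \/ (VX v /\ ~ VX u).
Proof. intros A. pose proof (bip_iff _ _ A). destruct (classic (VX u)); tauto. Qed.

Lemma trans_edge u1 v1 u2 v2 : adj u1 v1 -> adj u2 v2 -> pairOf u1 v1 = pairOf u2 v2 ->
  exists g, G g /\ ((g u1 = u2 /\ g v1 = v2) \/ (g u1 = v2 /\ g v1 = u2)).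
Proof.
  intros A1 A2 HP.
  destruct (side _ _ A1) as [[S1 _]|[S1 _]]; destruct (side _ _ A2) as [[S2 _]|[S2 _]].
  - destruct (trans_core u1 v1 u2 v2 A1 A2 S1 S2 HP) as [g [Hg [R1 R2]]]. eauto.
  - assert (E : pairOf u1 v1 = pairOf v2 u2) by (rewrite HP; apply pairOf_sym).
    destruct (trans_core u1 v1 v2 u2 A1 (Hsym _ _ A2) S1 S2 E) as [g [Hg [R1 R2]]]. eauto.
  - assert (E : pairOf v1 u1 = pairOf u2 v2) by (rewrite <- HP; apply pairOf_sym).
    destruct (trans_core v1 u1 u2 v2 (Hsym _ _ A1) A2 S1 S2 E) as [g [Hg [R1 R2]]]. eauto.
  - assert (E : pairOf v1 u1 = pairOf v2 u2) by (rewrite pairOf_sym, HP; apply pairOf_sym).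
    destruct (trans_core v1 u1 v2 u2 (Hsym _ _ A1) (Hsym _ _ A2) S1 S2 E) as [g [Hg [R1 R2]]]. eauto.
Qed.
Lemma G_id : G (fun x => x).
Proof. destruct G_group as [_ [H _]]. exact H. Qed.

Lemma G_comp g g' : G g -> G g' -> G (fun x => g' (g x)).
Proof. destruct G_group as [_ [_ [H _]]]. auto. Qed.

Lemma G_inv g : G g -> exists h, G h /\ (forall x, h (g x) = x) /\ (forall x, g (h x) = x).
Proof. destruct G_group as [_ [_ [_ H]]]. auto. Qed.

Lemma F_orb z z' : orbit G z = orbit G z' -> F z = F z'.
Proof.
  intros H. apply (orb_eq_iff _ _ G_group) in H. destruct H as [g [Hg <-]].
  symmetry. apply F_G; auto.
Qed.

Lemma EO_self u v : edge_orbit G u v (u, v).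
Proof. exists (fun x => x). split; [apply G_id|]. auto. Qed.

Lemma EO_sym u v : edge_orbit G u v = edge_orbit G v u.
Proof.
  apply functional_extensionality; intro p; apply propositional_extensionality.
  unfold edge_orbit. split; intros [g [Hg H]]; exists g; split; auto; tauto.
Qed.

Lemma EO_G g u v : G g -> edge_orbit G (g u) (g v) = edge_orbit G u v.
Proof.
  intros Hg. destruct (G_inv g Hg) as [h [Hh [H1 H2]]].
  apply functional_extensionality; intro p; apply propositional_extensionality.
  unfold edge_orbit. split.
  - intros [g' [Hg' H]]. exists (fun x => g' (g x)). split; [apply G_comp; auto|]. auto.
  - intros [g' [Hg' H]]. exists (fun x => g' (h x)). split; [apply G_comp; auto|].
    rewrite !H1. auto.
Qed.

Lemma pairOf_EO u v u' v' : edge_orbit G u v = edge_orbit G u' v' -> pairOf u v = pairOf u' v'.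
Proof.
  intros H. pose proof (EO_self u' v') as S. rewrite <- H in S.
  destruct S as [g [Hg [E|E]]]; injection E as E1 E2; subst.
  - symmetry. apply pairOf_G; auto.
  - rewrite pairOf_G; auto. apply pairOf_sym.
Qed.

Lemma endpoints u v : adj u v ->
  (F u = inl (fst (pairOf u v)) /\ F v = inr (snd (pairOf u v))) \/
  (F u = inr (snd (pairOf u v)) /\ F v = inl (fst (pairOf u v))).
Proof.
  intros A. destruct (side _ _ A) as [[S _]|[S _]].
  - destruct (pair_spec _ _ A S) as [x [y [Ey [Ex P]]]]. right. rewrite P. unfold F. rewrite Ey, Ex. auto.
  - destruct (pair_spec _ _ (Hsym _ _ A) S) as [x [y [Ey [Ex P]]]]. left.
    rewrite pairOf_sym, P. unfold F. rewrite Ey, Ex. auto.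
Qed.

Lemma ex_VX : exists v, VX v.
Proof.
  destruct Vinh as [v]. destruct (classic (VX v)) as [H|H]; eauto.
  destruct (col_ex v (inr y0) H) as [w [A _]]. exists w. pose proof (bip_iff _ _ A). tauto.
Qed.

Lemma ex_nVX : exists v, ~ VX v.
Proof.
  destruct Vinh as [v]. destruct (classic (VX v)) as [H|H]; eauto.
  destruct (col_ex v (inl x0) H) as [w [A _]]. exists w. pose proof (bip_iff _ _ A). tauto.
Qed.

Definition rep (O : qvert G) : V := proj1_sig (constructive_indefinite_description _ (proj2_sig O)).
Lemma rep_spec O : proj1_sig O = orbit G (rep O).
Proof. unfold rep. destruct (constructive_indefinite_description _ _). auto. Qed.

Lemma qedge_ex (E : qedge adj G) :
  exists uv : V * V, adj (fst uv) (snd uv) /\ proj1_sig E = edge_orbit G (fst uv) (snd uv).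
Proof. destruct E as [S [u [v [A H]]]]. exists (u, v). simpl. auto. Qed.

Definition repE (E : qedge adj G) : V * V := proj1_sig (constructive_indefinite_description _ (qedge_ex E)).
Lemma repE_spec E : adj (fst (repE E)) (snd (repE E)) /\
  proj1_sig E = edge_orbit G (fst (repE E)) (snd (repE E)).
Proof. unfold repE. destruct (constructive_indefinite_description _ _). auto. Qed.

Theorem main_iso : quotient_iso_Kbip adj G (orbits M) (orbits N).
Proof.
  exists (fun O => F (rep O)), (fun E => pairOf (fst (repE E)) (snd (repE E))).
  split; [|split].
  - apply bij_of.
    + intros O1 O2 H. destruct (trans_vertex _ _ H) as [g [Hg E]].
      apply sig_ext. rewrite !rep_spec, <- E. symmetry. apply orb_shift; auto. apply G_group.
    + intros [Om|On].
      * destruct (orbits_mk _ _ Om) as [x ->]. destruct ex_VX as [v Hv].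
        destruct (nb_spec v (inl x) Hv) as [A B].
        exists (mkorb G (nb v (inl x))).
        rewrite <- (F_orb (nb v (inl x))); [| rewrite <- rep_spec; auto].
        unfold F. rewrite (lab_eq _ _ A), B. auto.
      * destruct (orbits_mk _ _ On) as [y ->]. destruct ex_nVX as [v Hv].
        destruct (nb_spec v (inr y) Hv) as [A B].
        exists (mkorb G (nb v (inr y))).
        rewrite <- (F_orb (nb v (inr y))); [| rewrite <- rep_spec; auto].
        unfold F. rewrite (lab_eq _ _ A), B. auto.
  - apply bij_of.
    + intros E1 E2 H. destruct (repE_spec E1) as [A1 H1]. destruct (repE_spec E2) as [A2 H2].
      destruct (trans_edge _ _ _ _ A1 A2 H) as [g [Hg [[R1 R2]|[R1 R2]]]];
        apply sig_ext; rewrite H1, H2, <- R1, <- R2, EO_G; auto.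
      apply EO_sym.
    + intros [Om On].
      destruct (orbits_mk _ _ Om) as [x ->]. destruct (orbits_mk _ _ On) as [y ->].
      destruct ex_nVX as [w Hw].
      destruct (nb_spec w (inr y) Hw) as [A B]. set (a := nb w (inr y)) in *.
      assert (La : lab a = inr y) by (rewrite (lab_eq _ _ A); auto).
      pose proof (lab_inr _ _ La) as Va.
      destruct (nb_spec a (inl x) Va) as [A2 B2]. set (b := nb a (inl x)) in *.
      assert (Lb : lab b = inl x) by (rewrite (lab_eq _ _ A2); auto).
      exists (exist _ (edge_orbit G a b) (ex_intro _ a (ex_intro _ b (conj A2 eq_refl)))).
      destruct (repE_spec (exist _ (edge_orbit G a b) (ex_intro _ a (ex_intro _ b (conj A2 eq_refl)))))
        as [A3 H3]. simpl in H3.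
      rewrite <- (pairOf_EO _ _ _ _ H3). unfold pairOf. rewrite La, Lb. auto.
  - intros E O. destruct (repE_spec E) as [A HE].
    destruct (repE E) as [u v]. simpl in *.
    unfold qinc, K_inc. rewrite HE, (rep_spec O). set (z := rep O).
    destruct (endpoints u v A) as [[Fu Fv]|[Fu Fv]]; split.
    + intros [a [b [[g [Hg Hab]] [g' [Hg' Ha]]]]].
      assert (Fa : F a = F z) by (rewrite <- Ha; apply F_G; auto).
      destruct Hab as [E1|E1]; injection E1 as E2 E3; subst a; rewrite F_G in Fa; auto.
      * left. congruence.
      * right. congruence.
    + intros [H|H].
      * destruct (trans_vertex z u) as [g [Hg R]]; [congruence|].
        exists u, v. split; [apply EO_self|]. exists g; auto.
      * destruct (trans_vertex z v) as [g [Hg R]]; [congruence|].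
        exists v, u. split; [rewrite EO_sym; apply EO_self|]. exists g; auto.
    + intros [a [b [[g [Hg Hab]] [g' [Hg' Ha]]]]].
      assert (Fa : F a = F z) by (rewrite <- Ha; apply F_G; auto).
      destruct Hab as [E1|E1]; injection E1 as E2 E3; subst a; rewrite F_G in Fa; auto.
      * right. congruence.
      * left. congruence.
    + intros [H|H].
      * destruct (trans_vertex z v) as [g [Hg R]]; [congruence|].
        exists v, u. split; [rewrite EO_sym; apply EO_self|]. exists g; auto.
      * destruct (trans_vertex z u) as [g [Hg R]]; [congruence|].
        exists u, v. split; [apply EO_self|]. exists g; auto.
Qed.

End Tree.

Theorem lemma4p4
  (X Y : Type)
  (HX : exists x1 x2 : X, x1 <> x2)
  (HY : exists y1 y2 : Y, y1 <> y2)
  (M : (X -> X) -> Prop) (N : (Y -> Y) -> Prop)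
  (HM : perm_group M) (HN : perm_group N)
  (HMnt : nontrivial_group M) (HNnt : nontrivial_group N)
  (V : Type) (adj : V -> V -> Prop) (VX : V -> Prop)
  (Htree : is_tree adj) (Hbip : bipartition adj VX)
  (c : V -> V -> X + Y) (Hc : legal_colouring adj VX c) :
  quotient_iso_Kbip adj (U_c adj VX c M N) (orbits M) (orbits N).
Proof.
  destruct HX as [x0 _]. destruct HY as [y0 _].
  destruct Htree as [Hsym [Hirr [Vinh [Hconn Hacyc]]]].
  eapply main_iso; eauto.
Qed.
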